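(* Let $F,E$ be Archimedean vector lattices endowed with locally solid additive convergences and let $T:F\to E$ be a positive linear operator. Let $H=\{h\in F:\ T|_{F_{|h|}}\text{ is order continuous}\}$. Then $H$ is an ideal of $F$ and $T|_{H}$ is order continuous. Moreover, if $T$ is continuous (with respect to the given convergences), then $H$ is closed.
   Context: A convergence on a vector lattice is locally solid additive if addition and $f\mapsto -f$ are continuous and $|e_\alpha|\le|f_\alpha|$, $f_\alpha\to0$ imply $e_\alpha\to0$. $F_{u}=\bigcup_{\lambda\ge0}\lambda[-u,u]$ is the principal ideal generated by $u\in F_+$. A net order converges to $f$ if there is a set $G$ with $\bigwedge G=0$ such that for each $g\in G$ the net is eventually in $[f-g,f+g]$; an operator defined on a sublattice is order continuous if it maps order convergent nets (order convergence in the domain sublattice) to order convergent nets in $E$ with the image of the limit as limit. A set is closed if it contains the limits of all convergent nets in it.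
   Formalization: The closedness of H when T is continuous is claimed only for a Hausdorff convergence on E, one in which each net in E has at most one limit. The statement above fails without it. *)

(* Defs.v *)
From HB Require Import structures.
From mathcomp Require Import all_boot all_order all_algebra.
From mathcomp Require Import classical_sets reals.
Set Implicit Arguments. Unset Strict Implicit. Unset Printing Implicit Defensive.
Import Order.TTheory GRing.Theory Num.Theory.
Local Open Scope ring_scope.
Local Open Scope classical_set_scope.

Record vectorLattice (R : realType) := VectorLattice {
  vl_car :> lmodType R;
  vl_le : vl_car -> vl_car -> Prop;
  vl_sup : vl_car -> vl_car -> vl_car;
  vl_le_refl : forall x, vl_le x x;
  vl_le_anti : forall x y, vl_le x y -> vl_le y x -> x = y;
  vl_le_trans : forall x y z, vl_le x y -> vl_le y z -> vl_le x z;
  vl_le_add : forall x y z, vl_le x y -> vl_le (x + z) (y + z);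
  vl_le_scale : forall (a : R) x y, 0 <= a -> vl_le x y -> vl_le (a *: x) (a *: y);
  vl_sup_l : forall x y, vl_le x (vl_sup x y);
  vl_sup_r : forall x y, vl_le y (vl_sup x y);
  vl_sup_least : forall x y z, vl_le x z -> vl_le y z -> vl_le (vl_sup x y) z
}.

Section VL.
Variables (R : realType) (V : vectorLattice R).

Definition vabs (x : V) : V := vl_sup x (- x).

Definition archimedean : Prop :=
  forall x y : V, vl_le 0 x -> (forall n : nat, vl_le (x *+ n) y) -> x = 0.

Definition is_inf_in (S G : set V) (a : V) : Prop :=
  S a /\ (forall g, G g -> vl_le a g) /\
  (forall w, S w -> (forall g, G g -> vl_le w g) -> vl_le w a).

Definition ideal (S : set V) : Prop :=
  S 0 /\ (forall x y, S x -> S y -> S (x + y)) /\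
  (forall (a : R) x, S x -> S (a *: x)) /\
  (forall x y, S y -> vl_le (vabs x) (vabs y) -> S x).

Definition principal_ideal (u : V) : set V :=
  [set x | exists l : R, 0 <= l /\
     exists y, vl_le (- u) y /\ vl_le y u /\ x = l *: y].
End VL.

Definition directed (I : Type) (le : I -> I -> Prop) : Prop :=
  (exists i : I, True) /\ (forall i, le i i) /\
  (forall i j k, le i j -> le j k -> le i k) /\
  (forall i j, exists k, le i k /\ le j k).

Definition eventually (I : Type) (le : I -> I -> Prop) (P : I -> Prop) : Prop :=
  exists i0, forall i, le i0 i -> P i.

Definition oconv_in (R : realType) (V : vectorLattice R) (S : set V)
  (I : Type) (le : I -> I -> Prop) (x : I -> V) (f : V) : Prop :=
  exists G : set V, G `<=` S /\ is_inf_in S G 0 /\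
    forall g, G g -> eventually le (fun i => vl_le (f - g) (x i) /\ vl_le (x i) (f + g)).

Definition order_continuous_on (R : realType) (F E : vectorLattice R)
  (T : F -> E) (S : set F) : Prop :=
  forall (I : Type) (le : I -> I -> Prop), directed le ->
  forall (x : I -> F) (f : F), (forall i, S (x i)) -> S f ->
    oconv_in S le x f -> oconv_in [set: E] le (fun i => T (x i)) (T f).

Definition positive_op (R : realType) (F E : vectorLattice R) (T : F -> E) :=
  forall x : F, vl_le 0 x -> vl_le 0 (T x).

Definition net_conv (V : Type) :=
  forall I : Type, (I -> I -> Prop) -> (I -> V) -> V -> Prop.

Definition is_convergence (V : Type) (c : net_conv V) : Prop :=
  forall (I : Type) (le : I -> I -> Prop), directed le ->
  forall v : V, c I le (fun _ => v) v.

Definition hausdorff (V : Type) (c : net_conv V) : Prop :=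
  forall (I : Type) (le : I -> I -> Prop), directed le ->
  forall (x : I -> V) (a b : V), c I le x a -> c I le x b -> a = b.

Definition locally_solid_additive (R : realType) (V : vectorLattice R)
  (c : net_conv V) : Prop :=
  (forall (I : Type) (le : I -> I -> Prop), directed le ->
     forall (x y : I -> V) (f g : V), c I le x f -> c I le y g ->
       c I le (fun i => x i + y i) (f + g)) /\
  (forall (I : Type) (le : I -> I -> Prop), directed le ->
     forall (x : I -> V) (f : V), c I le x f -> c I le (fun i => - x i) (- f)) /\
  (forall (I : Type) (le : I -> I -> Prop), directed le ->
     forall (e f : I -> V), (forall i, vl_le (vabs (e i)) (vabs (f i))) ->
       c I le f 0 -> c I le e 0).

Definition continuous_op (A B : Type) (cA : net_conv A) (cB : net_conv B)
  (T : A -> B) : Prop :=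
  forall (I : Type) (le : I -> I -> Prop), directed le ->
  forall (x : I -> A) (f : A), cA I le x f -> cB I le (fun i => T (x i)) (T f).

Definition closed_in (A : Type) (c : net_conv A) (S : set A) : Prop :=
  forall (I : Type) (le : I -> I -> Prop), directed le ->
  forall (x : I -> A) (f : A), (forall i, S (x i)) -> c I le x f -> S f.

(* Main.v *)
Require Import Defs.
From HB Require Import structures.
From mathcomp Require Import all_boot all_order all_algebra.
From mathcomp Require Import classical_sets reals boolp.
Set Implicit Arguments. Unset Strict Implicit. Unset Printing Implicit Defensive.
Import Order.TTheory GRing.Theory Num.Theory.
Local Open Scope ring_scope.
Local Open Scope classical_set_scope.

Lemma eventually_impl (I : Type) (le : I -> I -> Prop) (P Q : I -> Prop) :
  eventually le P -> (forall i, P i -> Q i) -> eventually le Q.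
Proof. by move=> [i0 h] PQ; exists i0 => i /h; apply: PQ. Qed.

Section Basic.
Variables (R : realType) (V : vectorLattice R).
Local Notation "x <=v y" := (@vl_le R V x y) (at level 70).
Implicit Types x y z a b : V.

Lemma vtr x y z : x <=v y -> y <=v z -> x <=v z.
Proof. exact: vl_le_trans. Qed.

Lemma vaddl x y z : x <=v y -> z + x <=v z + y.
Proof. by move=> h; rewrite ![z + _]addrC; apply: vl_le_add. Qed.

Lemma vadd2 a b c d : a <=v b -> c <=v d -> a + c <=v b + d.
Proof. move=> h1 h2; apply: (vtr (vl_le_add c h1)); exact: vaddl. Qed.

Lemma vsub0 x y : x <=v y -> 0 <=v y - x.
Proof. by move=> h; have := vl_le_add (- x) h; rewrite subrr. Qed.

Lemma vsub0' x y : 0 <=v y - x -> x <=v y.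
Proof. by move=> h; have := vl_le_add x h; rewrite add0r subrK. Qed.

Lemma vopp x y : x <=v y -> - y <=v - x.
Proof.
move=> h; have := vl_le_add (- x - y) h.
by rewrite addrA subrr add0r addrCA subrr addr0.
Qed.

Lemma vopp' x y : - y <=v - x -> x <=v y.
Proof. by move/vopp; rewrite !opprK. Qed.

Lemma vsubl x y z : x - y <=v z -> x <=v z + y.
Proof. by move=> h; have := vl_le_add y h; rewrite subrK. Qed.

Lemma vsubr x y z : x <=v z + y -> x - y <=v z.
Proof. by move=> h; have := vl_le_add (- y) h; rewrite addrK. Qed.

Lemma vaddr_ge x y : 0 <=v y -> x <=v x + y.
Proof. by move=> h; have := vaddl x h; rewrite addr0. Qed.

Lemma vsubr_le x y : 0 <=v y -> x - y <=v x.
Proof. by move=> h; apply: vsubr; exact: vaddr_ge. Qed.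

Lemma vscale_ge0 (a : R) x : 0 <= a -> 0 <=v x -> 0 <=v a *: x.
Proof. by move=> a0 h; have := vl_le_scale a0 h; rewrite scaler0. Qed.

Lemma vscale_mono (a b : R) x : a <= b -> 0 <=v x -> a *: x <=v b *: x.
Proof.
move=> ab h; apply: vsub0'; rewrite -scalerBl; apply: vscale_ge0 => //.
by rewrite subr_ge0.
Qed.

Lemma vanti x y : x <=v y -> y <=v x -> x = y. Proof. exact: vl_le_anti. Qed.

Lemma vsw a b c : a - b <=v c -> a - c <=v b.
Proof. by move=> h; apply: vsubr; rewrite addrC; apply: vsubl. Qed.
Lemma vsubl' x f d : x - f <=v d -> x <=v f + d.
Proof. by move=> h; rewrite addrC; apply: vsubl. Qed.
Lemma vsubr' x f d : x <=v f + d -> x - f <=v d.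
Proof. by move=> h; apply: vsubr; rewrite addrC. Qed.

Definition vmeet x y : V := - vl_sup (- x) (- y).

Lemma vmeet_l x y : vmeet x y <=v x.
Proof. by apply: vopp'; rewrite opprK; apply: vl_sup_l. Qed.
Lemma vmeet_r x y : vmeet x y <=v y.
Proof. by apply: vopp'; rewrite opprK; apply: vl_sup_r. Qed.
Lemma vmeet_glb w x y : w <=v x -> w <=v y -> w <=v vmeet x y.
Proof.
move=> h1 h2; apply: vopp'; rewrite /vmeet opprK.
by apply: vl_sup_least; apply: vopp.
Qed.
Lemma vmeet_mono x y c : x <=v y -> vmeet x c <=v vmeet y c.
Proof. move=> h; apply: vmeet_glb; [exact: vtr (vmeet_l _ _) h| exact: vmeet_r]. Qed.

Lemma vabs_ge x : x <=v vabs x. Proof. exact: vl_sup_l. Qed.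
Lemma vabs_geN x : - x <=v vabs x. Proof. exact: vl_sup_r. Qed.

Lemma vabs_ge0 x : 0 <=v vabs x.
Proof.
have h := vadd2 (vabs_ge x) (vabs_geN x); rewrite subrr in h.
have i2 : 0 <= (2:R)^-1 by rewrite invr_ge0 ler0n.
have := vl_le_scale i2 h.
by rewrite scaler0 -mulr2n -scaler_nat scalerA mulVf ?pnatr_eq0 // scale1r.
Qed.

Lemma vabs_pos x : 0 <=v x -> vabs x = x.
Proof.
move=> h; apply: vanti; last exact: vabs_ge.
apply: vl_sup_least; first exact: vl_le_refl.
apply: (vtr _ h); have := vopp h; by rewrite oppr0.
Qed.

Lemma vabs_opp x : vabs (- x) = vabs x.
Proof.
rewrite /vabs opprK; apply: vanti; apply: vl_sup_least;
  (apply: vl_sup_l || apply: vl_sup_r).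
Qed.

Lemma vabs_le x c : x <=v c -> - x <=v c -> vabs x <=v c.
Proof. exact: vl_sup_least. Qed.

Lemma vabs_tri x y : vabs (x + y) <=v vabs x + vabs y.
Proof.
apply: vabs_le; first exact: vadd2 (vabs_ge _) (vabs_ge _).
by rewrite opprD; apply: vadd2 (vabs_geN _) (vabs_geN _).
Qed.

Lemma vabs_scale (a : R) x : vabs (a *: x) <=v `|a| *: vabs x.
Proof.
have [a0|a0] := leP 0 a.
  rewrite ger0_norm //; apply: vabs_le.
    by apply: vl_le_scale => //; exact: vabs_ge.
  by rewrite -scalerN; apply: vl_le_scale => //; exact: vabs_geN.
rewrite ltr0_norm //; apply: vabs_le.
  have -> : a *: x = (-a) *: (-x) by rewrite scaleNr scalerN opprK.
  apply: vl_le_scale; first by rewrite oppr_ge0 ltW.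
  exact: vabs_geN.
rewrite -scaleNr; apply: vl_le_scale; first by rewrite oppr_ge0 ltW.
exact: vabs_ge.
Qed.

Definition vpos x : V := vl_sup x 0.
Lemma vpos_ge x : x <=v vpos x. Proof. exact: vl_sup_l. Qed.
Lemma vpos_ge0 x : 0 <=v vpos x. Proof. exact: vl_sup_r. Qed.

Lemma riesz1 x a b : 0 <=v b -> x <=v a + b -> x <=v vmeet x a + b.
Proof.
move=> b0 h; apply: vsubl; apply: vmeet_glb; first exact: vsubr_le.
exact: vsubr.
Qed.

Lemma riesz2 x a b : 0 <=v x -> 0 <=v a -> 0 <=v b -> x <=v a + b ->
  x <=v vmeet x a + vmeet x b.
Proof.
move=> x0 a0 b0 h; rewrite addrC; apply: vsubl; apply: vmeet_glb.
  by apply: vsubr_le; apply: vmeet_glb.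
by apply: vsubr; rewrite addrC; apply: riesz1.
Qed.

Lemma pi_iff u x : 0 <=v u ->
  principal_ideal u x <-> exists l : R, 0 <= l /\ - (l *: u) <=v x /\ x <=v l *: u.
Proof.
move=> u0; split.
  case=> l [l0 [y [h1 [h2 ->]]]]; exists l; split => //; split.
    by rewrite -scalerN; apply: vl_le_scale.
  exact: vl_le_scale.
case=> l [l0 [h1 h2]]; have [le0|lne] := eqVneq l 0.
  subst l; move: h1 h2; rewrite scale0r oppr0 => h1 h2.
  have -> : x = 0 by apply: vanti.
  exists 0; split => //; exists 0; split.
    by have := vopp u0; rewrite oppr0.
  by split; last by rewrite scaler0.
have lp : 0 <= l^-1 by rewrite invr_ge0.
exists l; split => //; exists (l^-1 *: x); split; [|split].
- by have := vl_le_scale lp h1; rewrite scalerN scalerA mulVf // scale1r.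
- by have := vl_le_scale lp h2; rewrite scalerA mulVf // scale1r.
- by rewrite scalerA mulfV // scale1r.
Qed.

Lemma pi_sol u y s : 0 <=v u -> principal_ideal u s -> 0 <=v y -> y <=v s ->
  principal_ideal u y.
Proof.
move=> u0 /(pi_iff _ u0) [l [l0 [h1 h2]]] y0 ys; apply/(pi_iff _ u0).
exists l; split => //; split; last exact: vtr ys h2.
apply: vtr y0; have := vopp (vscale_ge0 l0 u0); by rewrite oppr0.
Qed.

Lemma pi0 u : 0 <=v u -> principal_ideal u 0.
Proof.
move=> u0; apply/(pi_iff _ u0); exists 0; rewrite scale0r oppr0; split => //.
by split; apply: vl_le_refl.
Qed.

Lemma piN u x : 0 <=v u -> principal_ideal u x -> principal_ideal u (- x).
Proof.
move=> u0 /(pi_iff _ u0) [l [l0 [h1 h2]]]; apply/(pi_iff _ u0).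
by exists l; split => //; split; [apply: vopp | apply: vopp'; rewrite opprK].
Qed.

End Basic.

Notation "x <=v y" := (vl_le x y) (at level 70).

Section Op.
Variables (R : realType) (F E : vectorLattice R) (T : {linear F -> E}).
Hypothesis Tpos : positive_op T.

Lemma Tmono x y : x <=v y -> T x <=v T y.
Proof.
move=> h; apply: vsub0'; rewrite -linearB; apply: Tpos; exact: vsub0.
Qed.


Definition Pc (S : set F) : Prop :=
  forall D : set F, D `<=` S -> (exists d, D d) -> (forall d, D d -> 0 <=v d) ->
  (forall d1 d2, D d1 -> D d2 -> exists d3, D d3 /\ d3 <=v d1 /\ d3 <=v d2) ->
  (forall w, S w -> (forall d, D d -> w <=v d) -> w <=v 0) ->
  forall z : E, (forall d, D d -> z <=v T d) -> z <=v 0.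

Lemma OC_P (S : set F) : S 0 -> order_continuous_on T S -> Pc S.
Proof.
move=> S0 oc D DS [d0 Dd0] Dpos Ddir Dinf z zlb.
pose I := {d : F | D d}.
pose le (a b : I) := proj1_sig b <=v proj1_sig a.
have dir : directed le.
  split; first by exists (exist _ d0 Dd0).
  split; first by move=> i; exact: vl_le_refl.
  split; first by move=> i j k hij hjk; exact: vtr hjk hij.
  move=> [a Da] [b Db]; have [c [Dc [ca cb]]] := Ddir a b Da Db.
  by exists (exist _ c Dc).
have := oc I le dir (fun i => proj1_sig i) 0 (fun i => DS _ (proj2_sig i)) S0.
case.
  exists D; split => //; split.
    by split => // w Sw; exact: Dinf.
  move=> g Dg; exists (exist _ g Dg) => -[i Di] /= hi; split.
    rewrite add0r; apply: vtr (Dpos _ Di); have := vopp (Dpos _ Dg).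
    by rewrite oppr0.
  by rewrite add0r.
move=> GE [_ [[_ [GE0 GEinf]] GEev]]; apply: GEinf => // g Gg.
have [[i Di] hi] := GEev g Gg.
have [_ h2] := hi (exist _ i Di) (vl_le_refl _).
apply: vtr (zlb _ Di) _; move: h2; by rewrite /= linear0 add0r.
Qed.

Lemma P_OC (S : set F) : S 0 -> (forall x, S x -> S (- x)) ->
  (forall y s, S s -> 0 <=v y -> y <=v s -> S y) -> Pc S -> order_continuous_on T S.
Proof.
move=> S0 SN Ssol P I le dir x f Sx Sf [G [GS [[_ [G0 Ginf]] Gev]]].
have [[i0 _] [lerefl [letr ledir]]] := dir.
have ev2 (P1 P2 : I -> Prop) : eventually le P1 -> eventually le P2 ->
    eventually le (fun i => P1 i /\ P2 i).
  move=> [a ha] [b hb]; have [k [ak bk]] := ledir a b.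
  by exists k => i ki; split; [apply: ha; exact: letr ki | apply: hb; exact: letr ki].
pose D := [set d : F | S d /\ 0 <=v d /\
  eventually le (fun i => f - d <=v x i /\ x i <=v f + d)].
have GD : G `<=` D by move=> g Gg; split; [exact: GS | split; [exact: G0 | exact: Gev]].
have Dne : exists d, D d.
  have [[g Gg]|nG] := pselect (exists g, G g); first by exists g; exact: GD.
  have Sle w : S w -> w <=v 0 by move=> Sw; apply: Ginf => // g Gg; case: nG; exists g.
  have Seq w : S w -> w = 0.
    move=> Sw; apply: vanti; first exact: Sle.
    by apply: vopp'; rewrite oppr0; exact: Sle (SN _ Sw).
  exists 0; split => //; split; first exact: vl_le_refl.
  exists i0 => i _; rewrite (Seq _ (Sx i)) (Seq _ Sf) subr0 addr0.
  by split; apply: vl_le_refl.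
have Ddir : forall d1 d2, D d1 -> D d2 -> exists d3, D d3 /\ d3 <=v d1 /\ d3 <=v d2.
  move=> d1 d2 [S1 [p1 e1]] [S2 [p2 e2]]; exists (vmeet d1 d2).
  split; last by split; [exact: vmeet_l | exact: vmeet_r].
  have m0 : 0 <=v vmeet d1 d2 by exact: vmeet_glb.
  split; first exact: Ssol S1 m0 (vmeet_l _ _).
  split => //; apply: (eventually_impl (ev2 _ _ e1 e2)).
  move=> i [[a1 b1] [a2 b2]]; split.
    by apply: vsw; apply: vmeet_glb; apply: vsw.
  by apply: vsubl'; apply: vmeet_glb; apply: vsubr'.
have Dinf : forall w, S w -> (forall d, D d -> w <=v d) -> w <=v 0.
  by move=> w Sw lb; apply: Ginf => // g Gg; apply: lb; exact: GD.
have PD := P D (fun d Dd => proj1 Dd) Dne (fun d Dd => proj1 (proj2 Dd)) Ddir Dinf.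
exists [set e | exists d, D d /\ e = T d]; split => //; split.
  split => //; split; first by move=> _ [d [Dd ->]]; apply: Tpos; case: Dd => _ [].
  by move=> w _ lb; apply: PD => d Dd; apply: lb; exists d.
move=> _ [d [[_ [_ ev]] ->]]; apply: (eventually_impl ev) => i [h1 h2]; split.
  by rewrite -linearB; apply: Tmono.
by rewrite -linearD; apply: Tmono.
Qed.
Lemma P_restrict (S S' : set F) : S' `<=` S ->
  (forall y s, S' s -> 0 <=v y -> y <=v s -> S' y) -> Pc S -> Pc S'.
Proof.
move=> sub sol P D DS' [d0 Dd0] Dpos Ddir Dinf z zlb.
apply: (P D) => //; first by move=> d /DS' /sub.
  by exists d0.
move=> w Sw lb; apply: vtr (vpos_ge w) _; apply: Dinf.
  apply: sol (DS' _ Dd0) (vpos_ge0 w) _; apply: vl_sup_least; first exact: lb.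
  exact: Dpos.
by move=> d Dd; apply: vl_sup_least; [exact: lb | exact: Dpos].
Qed.

Lemma cut (S : set F) (Ssol : forall y s, S s -> 0 <=v y -> y <=v s -> S y)
  (D : set F) (DS : D `<=` S) (d0 : F) (Dd0 : D d0)
  (Dpos : forall d, D d -> 0 <=v d)
  (Ddir : forall d1 d2, D d1 -> D d2 -> exists d3, D d3 /\ d3 <=v d1 /\ d3 <=v d2)
  (Dinf : forall w, S w -> (forall d, D d -> w <=v d) -> w <=v 0)
  (a : F) (a0 : 0 <=v a) (Pa : Pc (principal_ideal a)) (l : R) (l0 : 0 <= l)
  (z c : E) (H : forall d, D d -> d <=v d0 -> z <=v T (vmeet d (l *: a)) + c) :
  z <=v c.
Proof.
have la0 : 0 <=v l *: a by exact: vscale_ge0.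
pose D' := [set e | exists d, D d /\ d <=v d0 /\ e = vmeet d (l *: a)].
suff : z - c <=v 0 by move/vsubl; rewrite add0r.
apply: (Pa D').
- move=> _ [d [Dd [_ ->]]]; apply/(pi_iff _ a0); exists l; split => //; split.
    apply: vtr (vmeet_glb (Dpos _ Dd) la0).
    by have := vopp la0; rewrite oppr0.
  exact: vmeet_r.
- by exists (vmeet d0 (l *: a)); exists d0; split => //; split => //; exact: vl_le_refl.
- by move=> _ [d [Dd [_ ->]]]; apply: vmeet_glb => //; exact: Dpos.
- move=> _ _ [d1 [D1 [h1 ->]]] [d2 [D2 [h2 ->]]].
  have [d3 [D3 [h31 h32]]] := Ddir _ _ D1 D2.
  exists (vmeet d3 (l *: a)); split; first by exists d3; split => //; split => //; exact: vtr h31 h1.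
  by split; apply: vmeet_mono.
- move=> w _ lb.
  have lbD : forall d, D d -> w <=v d.
    move=> d Dd; have [d3 [D3 [h3 h30]]] := Ddir _ _ Dd Dd0.
    apply: vtr (lb _ _) _; first by exists d3; split => //; split.
    exact: vtr (vmeet_l _ _) h3.
  have wpD : forall d, D d -> vpos w <=v d.
    by move=> d Dd; apply: vl_sup_least; [exact: lbD | exact: Dpos].
  apply: vtr (vpos_ge w) _; apply: Dinf => //.
  exact: Ssol (DS _ Dd0) (vpos_ge0 w) (wpD _ Dd0).
- move=> _ [d [Dd [h ->]]]; apply: vsubr; exact: H.
Qed.

Lemma P_sum (u1 u2 : F) : 0 <=v u1 -> 0 <=v u2 ->
  Pc (principal_ideal u1) -> Pc (principal_ideal u2) -> Pc (principal_ideal (u1 + u2)).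
Proof.
move=> p1 p2 P1 P2 D DS [d0 Dd0] Dpos Ddir Dinf z zlb.
have u0 : 0 <=v u1 + u2 by rewrite -(addr0 0); exact: vadd2.
have Ssol := fun y s Ss => @pi_sol _ _ _ y s u0 Ss.
have [l [l0 [_ hd0]]] := (pi_iff _ u0).1 (DS _ Dd0).
have step : forall d', D d' -> d' <=v d0 -> z <=v T (vmeet d' (l *: u2)).
  move=> d' Dd' hd'.
  apply: (cut Ssol DS Dd0 Dpos Ddir Dinf p1 P1 l0) => d Dd hd.
  have [d3 [D3 [h3 h3']]] := Ddir _ _ Dd Dd'.
  apply: vtr (zlb _ D3) _; rewrite -linearD; apply: Tmono.
  apply: vtr (riesz2 (Dpos _ D3) (vscale_ge0 l0 p1) (vscale_ge0 l0 p2) _) _.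
    by rewrite -scalerDr; apply: vtr hd0; apply: vtr h3 hd.
  by apply: vadd2; apply: vmeet_mono.
have := cut Ssol DS Dd0 Dpos Ddir Dinf p2 P2 l0 (z := z) (c := 0).
by apply => d Dd hd; rewrite addr0; exact: step.
Qed.

Lemma P_zero : Pc (principal_ideal 0).
Proof.
move=> D DS [d0 Dd0] _ _ _ z zlb.
have z0 := vl_le_refl (0 : F).
have [l [_ [h1 h2]]] := (pi_iff _ z0).1 (DS _ Dd0).
move: h1 h2; rewrite scaler0 oppr0 => h1 h2.
have e : d0 = 0 by exact: vanti.
by have := zlb _ Dd0; rewrite e linear0.
Qed.

End Op.

Theorem proposition8p1 (R : realType) (F E : vectorLattice R)
  (archF : archimedean F) (archE : archimedean E)
  (cF : net_conv F) (cE : net_conv E)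
  (convF : is_convergence cF) (convE : is_convergence cE)
  (lsF : locally_solid_additive cF) (lsE : locally_solid_additive cE)
  (T : {linear F -> E}) (Tpos : positive_op T) :
  let H := [set h : F | order_continuous_on T (principal_ideal (vabs h))] in
  ideal H /\ order_continuous_on T H /\
  (hausdorff cE -> continuous_op cF cE T -> closed_in cF H).
Proof.
move=> H.
have OCP h : H h -> Pc T (principal_ideal (vabs h)).
  by move=> Hh; apply: OC_P (pi0 (vabs_ge0 h)) Hh.
have POC u : 0 <=v u -> Pc T (principal_ideal u) -> order_continuous_on T (principal_ideal u).
  move=> u0; apply: (P_OC Tpos (pi0 u0) (fun x Hx => piN u0 Hx)) => y s Ss.
  exact: pi_sol u0 Ss.
have Hb u x (c : R) : 0 <=v u -> 0 <= c -> Pc T (principal_ideal u) ->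
    vabs x <=v c *: u -> H x.
  move=> u0 c0 Pu hx; rewrite /H /=; apply: POC (vabs_ge0 x) _.
  apply: P_restrict Pu; last by move=> y s Ss; exact: pi_sol (vabs_ge0 x) Ss.
  move=> y /(pi_iff _ (vabs_ge0 x)) [l [l0 [h1 h2]]]; apply/(pi_iff _ u0).
  have hb : l *: vabs x <=v (l * c) *: u by rewrite -scalerA; exact: vl_le_scale.
  exists (l * c); split; first exact: mulr_ge0.
  by split; [apply: vtr h1; apply: vopp | apply: vtr h2 hb].
have Hid : ideal H.
  split; [|split; [|split]].
  - apply: (Hb 0 0 0 (vl_le_refl _) (lexx _) (@P_zero _ _ _ T)).
    by rewrite vabs_pos ?scaler0; exact: vl_le_refl.
  - move=> x y Hx Hy.
    apply: (Hb _ _ 1 _ ler01 (P_sum Tpos (vabs_ge0 x) (vabs_ge0 y) (OCP _ Hx) (OCP _ Hy))).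
      by rewrite -(addr0 0); apply: vadd2; exact: vabs_ge0.
    by rewrite scale1r; exact: vabs_tri.
  - move=> a x Hx; apply: (Hb _ _ `|a| (vabs_ge0 x) (normr_ge0 _) (OCP _ Hx)).
    exact: vabs_scale.
  - move=> x y Hy hxy; apply: (Hb _ _ 1 (vabs_ge0 y) ler01 (OCP _ Hy)).
    by rewrite scale1r.
have [H0 [HD [HZ Hsol]]] := Hid.
split => //; split.
  apply: (P_OC Tpos H0).
  - by move=> x Hx; rewrite -scaleN1r; apply: HZ.
  - move=> y s Hs y0 ys; apply: Hsol Hs _; rewrite vabs_pos //.
    exact: vtr ys (vabs_ge s).
  move=> D DH [d0 Dd0] Dpos Ddir Dinf z zlb.
  have d00 := Dpos _ Dd0.
  have P0 := OCP _ (DH _ Dd0); rewrite (vabs_pos d00) in P0.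
  apply: (P0 [set d | D d /\ d <=v d0]).
  - move=> d [Dd hd]; apply/(pi_iff _ d00); exists 1; rewrite scale1r; split => //.
    split => //; apply: vtr (Dpos _ Dd); by have := vopp d00; rewrite oppr0.
  - by exists d0; split => //; exact: vl_le_refl.
  - by move=> d [Dd _]; exact: Dpos.
  - move=> d1 d2 [D1 h1] [D2 h2]; have [d3 [D3 [h31 h32]]] := Ddir _ _ D1 D2.
    by exists d3; split => //; split => //; exact: vtr h31 h1.
  - move=> w /(pi_iff _ d00) [l [l0 [h1 h2]]] lb; apply: Dinf.
      apply: (Hb _ _ l d00 l0 P0); apply: vabs_le => //.
      by apply: vopp'; rewrite opprK.
    move=> d Dd; have [d3 [D3 [h3 h30]]] := Ddir _ _ Dd Dd0.
    by apply: vtr (lb d3 _) h3; split.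
  - by move=> d [Dd _]; exact: zlb.
move=> haus Tc I le dir h_ h Hh conv.
have u0 := vabs_ge0 h.
rewrite /H /=; apply: (POC _ u0).
move=> D DS [d0 Dd0] Dpos Ddir Dinf z zlb.
have Ssol := fun y s Ss => @pi_sol _ _ _ y s u0 Ss.
have [l [l0 [_ hd0]]] := (pi_iff _ u0).1 (DS _ Dd0).
pose n := Num.Def.archi_bound l.
have ln : l <= n%:R by exact: ltW (archi_boundP l0).
have n0 : 0 <= (n%:R : R) by exact: ler0n.
have hd0' : d0 <=v n%:R *: vabs h := vtr hd0 (vscale_mono ln u0).
pose p g := vpos (vabs h - vabs (h_ g)).
have key : forall g, z <=v n%:R *: T (p g).
  move=> g; have ag := vabs_ge0 (h_ g).
  apply: (cut Ssol DS Dd0 Dpos Ddir Dinf ag (OCP _ (Hh g)) n0) => d Dd hd.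
  apply: vtr (zlb _ Dd) _; rewrite -linearZ -linearD; apply: (Tmono Tpos).
  apply: riesz1; first exact: vscale_ge0 n0 (vpos_ge0 _).
  rewrite -scalerDr; apply: vtr hd (vtr hd0' (vl_le_scale n0 _)).
  by rewrite addrC; apply: vsubl; exact: vpos_ge.
have pconv : cF I le p 0.
  have c1 := lsF.1 _ _ dir h_ (fun _ => - h) h (- h) conv (convF _ _ dir (- h)).
  rewrite subrr in c1.
  apply: (lsF.2.2 _ _ dir p _ _ c1) => g.
  rewrite vabs_pos; last exact: vpos_ge0.
  apply: vl_sup_least; last exact: vabs_ge0.
  apply: vsubr; have {1}-> : h = (h - h_ g) + h_ g by rewrite subrK.
  apply: vtr (vabs_tri _ _) _; apply: vl_le_add.
  by rewrite -opprB vabs_opp; exact: vl_le_refl.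
have Tconv : cE I le (fun g => T (p g)) 0.
  by have := Tc I le dir p 0 pconv; rewrite linear0.
have nconv : forall m, cE I le (fun g => T (p g) *+ m) 0.
  elim=> [|m IH].
    have -> : (fun g => T (p g) *+ 0) = (fun _ => 0) by apply: funext => g; rewrite mulr0n.
    exact: convE.
  have -> : (fun g => T (p g) *+ m.+1) = (fun g => T (p g) + T (p g) *+ m).
    by apply: funext => g; rewrite mulrS.
  by have := lsE.1 _ _ dir _ _ _ _ Tconv IH; rewrite addr0.
have Tp0 g : 0 <=v T (p g) *+ n.
  by rewrite -scaler_nat; apply: vscale_ge0 => //; apply: Tpos; exact: vpos_ge0.
have zp : cE I le (fun _ => vpos z) 0.
  apply: (lsE.2.2 _ _ dir _ _ _ (nconv n)) => g.
  rewrite vabs_pos; last exact: vpos_ge0.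
  rewrite vabs_pos; last exact: Tp0.
  apply: vl_sup_least; last exact: Tp0.
  by rewrite -scaler_nat; exact: key.
have := haus _ _ dir (fun _ => vpos z) (vpos z) 0 (convE _ _ dir _) zp.
by move=> e; rewrite -e; exact: vpos_ge.
Qed.
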